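(* Fix $0<\epsilon<1$. Let $A\in\mathbb{R}^{m\times n}$ have i.i.d. $\mathcal{N}(0,1/m)$ entries with rows $\{a_\ell\}_{\ell=1}^m$, and let $Z$ be a $k$-dimensional subspace of $\mathbb{R}^n$. Let $E_{Z,A}$ be the event that there exists a set $Z_0\subset Z$ such that: each $z_0\in Z_0$ satisfies $\langle a_\ell,z_0\rangle\neq0$ for all $\ell\in[m]$; $|Z_0|\leqslant10m^{2k}$; and for all $z\in Z$ with $\|z\|=1$ there exists $z_0\in Z_0$ with $\|z-z_0\|\leqslant\epsilon$. There are positive absolute constants $C_2,c$ and a constant $\hat C$ depending polynomially on $\epsilon^{-1}$ such that if $m\geqslant\hat Ck$, then $\mathbb{P}(E_{Z,A})\geqslant1-C_2\exp(-c\epsilon m)$. *)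

(* Defs.v *)
From HB Require Import structures.
From mathcomp Require Import all_boot all_order all_algebra.
From mathcomp Require Import all_classical all_reals all_analysis.
From mathcomp Require Import normal_distribution.

Set Implicit Arguments.
Unset Strict Implicit.
Unset Printing Implicit Defensive.

Import Order.TTheory GRing.Theory Num.Theory.
Local Open Scope classical_set_scope.
Local Open Scope ring_scope.

Definition enorm {R : realType} {n : nat} (v : 'rV[R]_n) : R :=
  Num.sqrt (\sum_(j < n) v 0 j ^+ 2).

(* The entries of a random matrix (A_{lj}) : Omega -> R are mutually
   independent: product rule for all events {A_lj \in B_lj}, B_lj Borel
   (choosing B_lj = setT covers every subfamily). *)
Definition mutually_independent_entries {R : realType} {d : measure_display}
  {T : measurableType d} (P : probability T R) (m n : nat)
  (A : 'I_m -> 'I_n -> T -> R) : Prop :=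
  forall B : 'I_m -> 'I_n -> set R,
    (forall l j, measurable (B l j)) ->
    P [set w | forall l j, B l j (A l j w)] =
    (\prod_(l < m) \prod_(j < n) P (A l j @^-1` B l j))%E.

(* Each entry A_lj has law N(0, 1/m) (standard deviation sqrt(1/m)). *)
Definition gaussian_entries {R : realType} {d : measure_display}
  {T : measurableType d} (P : probability T R) (m n : nat)
  (A : 'I_m -> 'I_n -> T -> R) : Prop :=
  forall l j, measurable_fun [set: T] (A l j) /\
    forall B : set R, measurable B ->
      P (A l j @^-1` B) = normal_prob 0 (Num.sqrt (m%:R^-1)) B.

Definition mat_at {R : realType} {T : Type} (m n : nat)
  (A : 'I_m -> 'I_n -> T -> R) (w : T) : 'M[R]_(m, n) :=
  \matrix_(l < m, j < n) A l j w.

Definition event_EZA {R : realType} {T : Type} (m n k : nat) (eps : R)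
  (Z : {vspace 'rV[R]_n}) (A : 'I_m -> 'I_n -> T -> R) : set T :=
  [set w | exists Z0 : seq 'rV[R]_n,
     [/\ forall z0, z0 \in Z0 ->
           (z0 \in Z) /\
           (forall l : 'I_m, \sum_(j < n) mat_at A w l j * z0 0 j != 0),
         uniq Z0 /\ (size Z0 <= 10 * m ^ (2 * k))%N
       & forall z, z \in Z -> enorm z = 1 ->
           exists2 z0, z0 \in Z0 & enorm (z - z0) <= eps]].

(* Main.v *)
Set Warnings "-all".
Require Import Defs.
From HB Require Import structures.
From mathcomp Require Import all_boot all_order all_algebra.
From mathcomp Require Import all_classical all_reals all_analysis.
From mathcomp Require Import normal_distribution measurable_realfun.
From mathcomp Require Import ring lra.

Set Implicit Arguments.
Unset Strict Implicit.
Unset Printing Implicit Defensive.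
Import Order.TTheory GRing.Theory Num.Theory.
Local Open Scope classical_set_scope.
Local Open Scope ring_scope.
Section Dot.
Variable R : realType.
Variable n : nat.
Implicit Types v w x y : 'rV[R]_n.

Definition dot (u v : 'rV[R]_n) : R := \sum_(j < n) u 0 j * v 0 j.

Lemma dotC (u : 'rV[R]_n) v : dot u v = dot v u.
Proof. by apply: eq_bigr => j _; rewrite mulrC. Qed.
Lemma dotDl (u : 'rV[R]_n) w v : dot (u + w) v = dot u v + dot w v.
Proof. by rewrite /dot -big_split; apply: eq_bigr => j _; rewrite mxE mulrDl. Qed.
Lemma dotZl c (u : 'rV[R]_n) v : dot (c *: u) v = c * dot u v.
Proof. by rewrite /dot mulr_sumr; apply: eq_bigr => j _; rewrite mxE mulrA. Qed.
Lemma dot0l v : dot 0 v = 0.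
Proof. by rewrite /dot big1 // => j _; rewrite mxE mul0r. Qed.
Lemma dotNl (u : 'rV[R]_n) v : dot (- u) v = - dot u v.
Proof. by rewrite -scaleN1r dotZl mulN1r. Qed.
Lemma dotBl (u : 'rV[R]_n) w v : dot (u - w) v = dot u v - dot w v.
Proof. by rewrite dotDl dotNl. Qed.
Lemma dotDr (u : 'rV[R]_n) w v : dot v (u + w) = dot v u + dot v w.
Proof. by rewrite dotC dotDl !(dotC v). Qed.
Lemma dotZr c (u : 'rV[R]_n) v : dot v (c *: u) = c * dot v u.
Proof. by rewrite dotC dotZl dotC. Qed.
Lemma dotBr (u : 'rV[R]_n) w v : dot v (u - w) = dot v u - dot v w.
Proof. by rewrite dotC dotBl !(dotC v). Qed.
Lemma dot0r v : dot v 0 = 0.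
Proof. by rewrite dotC dot0l. Qed.
Lemma dot_suml (I : Type) (s : seq I) (P : pred I) (F : I -> 'rV[R]_n) v :
  dot (\sum_(i <- s | P i) F i) v = \sum_(i <- s | P i) dot (F i) v.
Proof.
elim/big_rec2: _ => [|i x y _ <-]; by rewrite ?dot0l ?dotDl.
Qed.
Lemma dot_sumr (I : Type) (s : seq I) (P : pred I) (F : I -> 'rV[R]_n) v :
  dot v (\sum_(i <- s | P i) F i) = \sum_(i <- s | P i) dot v (F i).
Proof. by rewrite dotC dot_suml; apply: eq_bigr => i _; rewrite dotC. Qed.
Lemma dot_ge0 (u : 'rV[R]_n) : 0 <= dot u u.
Proof. by apply: sumr_ge0 => j _; rewrite -expr2 sqr_ge0. Qed.
Lemma dot_eq0 (u : 'rV[R]_n) : dot u u = 0 -> u = 0.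
Proof.
move=> H; apply/rowP => j; rewrite mxE.
have h0 : forall i : 'I_n, predT i -> 0 <= u 0 i * u 0 i.
  by move=> i _; rewrite -expr2 sqr_ge0.
have /eqP := @psumr_eq0P _ _ predT (fun j => u 0 j * u 0 j) h0 H j isT.
by rewrite mulf_eq0 orbb => /eqP.
Qed.
Lemma enormE (u : 'rV[R]_n) : enorm u = Num.sqrt (dot u u).
Proof. by rewrite /enorm /dot; congr Num.sqrt; apply: eq_bigr => j _; rewrite expr2. Qed.

Lemma dot_sub_le x y : dot (x - y) (x - y) <= 2 * dot x x + 2 * dot y y.
Proof.
rewrite /dot !mulr_sumr -big_split /=; apply: ler_sum => j _.
rewrite !mxE; set a := x 0 j; set b := y 0 j.
have := sqr_ge0 (a + b); rewrite expr2 => h. nra.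
Qed.

Definition ortho k (u : nat -> 'rV[R]_n) :=
  forall i j, (i < k)%N -> (j < k)%N -> dot (u i) (u j) = (i == j)%:R.
Definition lincomb k (c : nat -> R) (u : nat -> 'rV[R]_n) :=
  \sum_(i < k) c i *: u i.
Definition proj k u x := lincomb k (fun i => dot x (u i)) u.

Lemma dot_lincomb_u k c u j : ortho k u -> (j < k)%N ->
  dot (lincomb k c u) (u j) = c j.
Proof.
move=> ou jk; rewrite /lincomb dot_suml (bigD1 (Ordinal jk)) //= big1.
  by rewrite dotZl ou // eqxx mulr1 addr0.
move=> i /eqP ij; rewrite dotZl ou //; case: eqP => [e|]; last by rewrite mulr0.
by exfalso; apply: ij; apply: val_inj.
Qed.

Lemma dot_lincomb k c d u : ortho k u ->
  dot (lincomb k c u) (lincomb k d u) = \sum_(i < k) c i * d i.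
Proof.
move=> ou; rewrite {2}/lincomb dot_sumr; apply: eq_bigr => i _.
by rewrite dotZr dot_lincomb_u // mulrC.
Qed.

Lemma dot_proj k u x j : ortho k u -> (j < k)%N -> dot (proj k u x) (u j) = dot x (u j).
Proof. by move=> ou jk; rewrite /proj dot_lincomb_u. Qed.

Lemma proj0 k u : proj k u 0 = 0.
Proof. by rewrite /proj /lincomb big1 // => i _; rewrite dot0l scale0r. Qed.
Lemma projD k u x y : proj k u (x + y) = proj k u x + proj k u y.
Proof. by rewrite /proj /lincomb -big_split; apply: eq_bigr => i _; rewrite dotDl scalerDl. Qed.
Lemma projZ k u c x : proj k u (c *: x) = c *: proj k u x.
Proof. by rewrite /proj /lincomb scaler_sumr; apply: eq_bigr => i _; rewrite dotZl scalerA. Qed.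
Lemma proj_sum k u (I : Type) (s : seq I) (P : pred I) (F : I -> 'rV[R]_n) :
  proj k u (\sum_(i <- s | P i) F i) = \sum_(i <- s | P i) proj k u (F i).
Proof. elim/big_rec2: _ => [|i x y _ <-]; by rewrite ?proj0 ?projD. Qed.

End Dot.

Section Dot2.
Variable R : realType.
Variable n : nat.
Lemma dot_lcu k (c : 'I_k -> R) (u : nat -> 'rV[R]_n) (j : 'I_k) : ortho k u ->
  dot (\sum_(i < k) c i *: u i) (u j) = c j.
Proof.
move=> ou; rewrite dot_suml (bigD1 j) //= big1.
  by rewrite dotZl ou // eqxx mulr1 addr0.
move=> i /eqP ij; rewrite dotZl ou //; case: eqP => [e|]; last by rewrite mulr0.
by exfalso; apply: ij; apply: val_inj.
Qed.
Lemma dot_lc k (c d : 'I_k -> R) (u : nat -> 'rV[R]_n) : ortho k u ->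
  dot (\sum_(i < k) c i *: u i) (\sum_(i < k) d i *: u i) = \sum_(i < k) c i * d i.
Proof.
move=> ou; rewrite dot_sumr; apply: eq_bigr => i _.
by rewrite dotZr dot_lcu // mulrC.
Qed.
End Dot2.
Section GS.
Variable R : realType.
Variable n : nat.

Lemma proj_in k (u : nat -> 'rV[R]_n) (Z : {vspace 'rV[R]_n}) x :
  (forall i, (i < k)%N -> u i \in Z) -> proj k u x \in Z.
Proof.
move=> uZ; rewrite /proj /lincomb; apply: memv_suml => i _.
by apply: memvZ; apply: uZ.
Qed.

Lemma gram_schmidt (Z : {vspace 'rV[R]_n}) (b : seq 'rV[R]_n) :
  all (fun x => x \in Z) b ->
  exists k (u : nat -> 'rV[R]_n), [/\ (k <= size b)%N, ortho k u,
    (forall i, (i < k)%N -> u i \in Z) & forall x, x \in b -> x = proj k u x].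
Proof.
elim: b => [|x b IH] /=.
  by move=> _; exists 0%N, (fun _ => 0); split => // i j.
case/andP=> xZ /IH [k [u [kb ou uZ ex]]].
set w := x - proj k u x.
have wu j : (j < k)%N -> dot w (u j) = 0.
  by move=> jk; rewrite /w dotBl dot_proj // subrr.
have [w0|wn0] := eqVneq w 0.
  exists k, u; split => //; first by apply: leqW.
  move=> y; rewrite in_cons => /orP [/eqP ->|/ex //].
  by apply/eqP; rewrite -subr_eq0 -/w w0.
have dw_gt0 : 0 < dot w w.
  rewrite lt_def dot_ge0 andbT; apply/eqP => /dot_eq0 h; by rewrite h eqxx in wn0.
set nw := Num.sqrt (dot w w).
have nw_gt0 : 0 < nw by rewrite sqrtr_gt0.
have nw2 : nw * nw = dot w w by rewrite -expr2 sqr_sqrtr // dot_ge0.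
set e := nw^-1 *: w.
have ee : dot e e = 1.
  rewrite /e dotZl dotZr -nw2; field; by rewrite gt_eqF.
have eu j : (j < k)%N -> dot e (u j) = 0.
  by move=> jk; rewrite /e dotZl wu // mulr0.
pose u' := fun i => if i == k then e else u i.
have proj_ext y : proj k.+1 u' y = proj k u y + dot y e *: e.
  rewrite /proj /lincomb big_ord_recr /= /u' eqxx; congr (_ + _).
  by apply: eq_bigr => i _; rewrite /= (ltn_eqF (ltn_ord i)).
have ou' : ortho k.+1 u'.
  move=> i j ik jk; rewrite /u'.
  have [ei|ne_ik] := eqVneq i k; have [ej|ne_jk] := eqVneq j k.
  - by rewrite ei ej eqxx ee.
  - have jk' : (j < k)%N by rewrite ltn_neqAle ne_jk -ltnS.
    by rewrite eu // ei eq_sym (negbTE ne_jk).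
  - have ik' : (i < k)%N by rewrite ltn_neqAle ne_ik -ltnS.
    by rewrite dotC eu // ej (negbTE ne_ik).
  - have jk' : (j < k)%N by rewrite ltn_neqAle ne_jk -ltnS.
    have ik' : (i < k)%N by rewrite ltn_neqAle ne_ik -ltnS.
    by rewrite ou.
exists k.+1, u'; split => //.
- move=> i; rewrite ltnS leq_eqVlt /u' => /orP [/eqP ->|ik].
    rewrite eqxx.
    have wZ : w \in Z by rewrite /w memvB // proj_in.
    by rewrite /e memvZ.
  by rewrite (ltn_eqF ik); apply: uZ.
move=> y; rewrite in_cons => /orP [/eqP ->|yb].
  rewrite proj_ext.
  have -> : dot x e = nw.
    have -> : x = w + proj k u x by rewrite /w subrK.
    have pw : dot (proj k u x) w = 0.
      rewrite /proj /lincomb dot_suml big1 // => i _.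
      by rewrite dotZl (dotC (u i)) wu // mulr0.
    rewrite dotDl /e !dotZr pw mulr0 addr0 -nw2; field; by rewrite gt_eqF.
  by rewrite /e scalerA divff ?gt_eqF // scale1r /w addrC subrK.
rewrite proj_ext {1}(ex y yb).
suff -> : dot y e = 0 by rewrite scale0r addr0.
rewrite (ex y yb) /proj /lincomb dot_suml big1 // => i _.
by rewrite dotZl (dotC (u i)) eu // mulr0.
Qed.

Lemma onb_exists (Z : {vspace 'rV[R]_n}) :
  exists k (u : nat -> 'rV[R]_n), [/\ (k <= \dim Z)%N, ortho k u,
    (forall i, (i < k)%N -> u i \in Z) & forall x, x \in Z -> x = proj k u x].
Proof.
have bZ : all (fun x => x \in Z) (vbasis Z).
  by apply/allP => x /vbasis_mem.
have [k [u [kb ou uZ ex]]] := gram_schmidt bZ.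
exists k, u; split => //; first by rewrite size_tuple in kb.
move=> x xZ; rewrite (coord_vbasis xZ) proj_sum; apply: eq_bigr => i _.
rewrite projZ -ex //; apply: mem_nth; by rewrite size_tuple.
Qed.

End GS.
Lemma tau_exists (R : realType) (I : eqType) (s : seq I) (al be : I -> R) :
  (forall l, be l != 0) ->
  exists2 t1, 0 < t1 & forall t, 0 < t -> t <= t1 ->
    forall l, l \in s -> al l + t * be l != 0.
Proof.
move=> be0; elim: s => [|x s [t1 t1p IH]].
  by exists 1 => // t _ _ l; rewrite in_nil.
have [ax0|ax0] := eqVneq (al x) 0.
  exists t1 => // t t0 tt1 l; rewrite in_cons => /orP [/eqP ->|ls].
    by rewrite ax0 add0r mulf_neq0 // gt_eqF.
  by apply: IH.
have bxp : 0 < `|be x| by rewrite normr_gt0.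
have axp : 0 < `|al x| by rewrite normr_gt0.
exists (Num.min t1 (`|al x| / (2 * `|be x|))).
  by rewrite lt_min t1p /= divr_gt0 // mulr_gt0.
move=> t t0; rewrite le_min => /andP [tt1 tb] l; rewrite in_cons.
case/orP=> [/eqP ->|ls]; last by apply: IH.
apply/negP => /eqP h.
have e : al x = - (t * be x) by apply/eqP; rewrite -addr_eq0 h.
have e2 : `|al x| = t * `|be x| by rewrite e normrN normrM ger0_norm // ltW.
move: tb; rewrite ler_pdivlMr ?mulr_gt0 // => tb.
have : t * (2 * `|be x|) = 2 * `|al x| by rewrite e2 mulrCA.
move: tb axp; set A := `|al x|; set B := t * (2 * `|be x|) => tb axp eB.
lra.
Qed.

Lemma cell_exists (R : realType) (lo d x : R) (K : nat) : 0 < d -> lo <= x ->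
  x <= lo + K%:R * d -> (0 < K)%N ->
  exists j : 'I_K, lo + j%:R * d <= x <= lo + j.+1%:R * d.
Proof.
move=> d0 lox; elim: K => [//|K IH] xK _.
have [K0|Kp] := posnP K.
  exists ord0; rewrite /= mul0r addr0 lox /=; by rewrite K0 in xK.
have [xK'|xK'] := leP x (lo + K%:R * d).
  have [j hj] := IH xK' Kp.
  by exists (widen_ord (leqnSn K) j).
exists ord_max => /=; rewrite xK andbT; exact: ltW.
Qed.
Lemma sq_le_expn (a b e : nat) : (a <= b)%N -> (a ^ e <= b ^ e)%N.
Proof. by move=> ab; elim: e => [//|e IH]; rewrite !expnS leq_mul. Qed.

Lemma net_exists (R : realType) (n m k : nat) (Z : {vspace 'rV[R]_n}) (eps : R)
  (a : 'I_m -> 'rV[R]_n) (v : 'rV[R]_n) :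
  \dim Z = k -> (0 < k)%N -> 0 < eps -> eps < 1 ->
  10 * eps^-1 * k%:R <= m%:R -> v \in Z -> (forall l, dot (a l) v != 0) ->
  exists Z0 : seq 'rV[R]_n,
    [/\ forall z0, z0 \in Z0 -> z0 \in Z /\ (forall l, dot (a l) z0 != 0),
        uniq Z0 /\ (size Z0 <= 10 * m ^ (2 * k))%N
      & forall z, z \in Z -> enorm z = 1 ->
          exists2 z0, z0 \in Z0 & enorm (z - z0) <= eps].
Proof.
move=> dimZ k0 e0 e1 hm vZ av.
have [k' [u [k'k ou uZ ex]]] := onb_exists Z.
rewrite dimZ in k'k.
have kR : 1 <= k%:R :> R by rewrite ler1n.
have kR0 : k%:R != 0 :> R by rewrite pnatr_eq0 -lt0n.
set del := eps / (2 * k%:R).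
have del0 : 0 < del by rewrite divr_gt0 // mulr_gt0 // ltr0n.
set Kc := (Num.truncn (2 / del)).+1.
have KcP : 2 / del < Kc%:R by apply: truncnS_gt.
have KcU : Kc%:R <= 2 / del + 1.
  rewrite /Kc -addn1 natrD lerD2r truncn_le; by rewrite divr_ge0 // ltW.
set q := eps^-1 * k%:R.
have q1 : 1 <= q.
  have ei : 1 <= eps^-1 by rewrite invf_ge1 // ltW.
  rewrite /q; move: ei kR; set x := eps^-1; set y := k%:R => ei ky; nra.
have dq : 2 / del = 4 * q.
  by rewrite /del /q; field; rewrite kR0 gt_eqF.
have h1 : 2 / del + 1 <= m%:R.
  apply: le_trans hm; rewrite dq -mulrA -/q; lra.
have m1 : 1 <= m%:R :> R by apply: le_trans h1; rewrite dq; lra.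
have Kcm : (Kc <= m ^ 2)%N.
  rewrite -(ler_nat R) natrX; apply: (le_trans KcU); apply: (le_trans h1).
  rewrite expr2; nra.
pose gam (j : nat) : R := -1 + j%:R * del.
pose g (f : {ffun 'I_k' -> 'I_Kc}) := \sum_(i < k') gam (f i) *: u i.
have gZ f : g f \in Z.
  by apply: memv_suml => i _; apply: memvZ; apply: uZ.
set dv := dot v v.
have dv0 : 0 <= dv by apply: dot_ge0.
set t0 := eps / (2 * (1 + dv)).
have t00 : 0 < t0 by rewrite divr_gt0 // mulr_gt0 // ltr_pwDl.
have t0e : t0 * (2 * (1 + dv)) = eps.
  by rewrite /t0 divfK // gt_eqF // mulr_gt0 // ltr_pwDl.
have tauP f : exists tau : R, [/\ 0 < tau, tau ^+ 2 * dv <= eps ^+ 2 / 4 &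
    forall l, dot (a l) (g f) + tau * dot (a l) v != 0].
  have [t1 t1p H] := @tau_exists _ _ (enum 'I_m) (fun l => dot (a l) (g f))
    (fun l => dot (a l) v) av.
  exists (Num.min t1 t0); split.
  - by rewrite lt_min t1p t00.
  - have tt0 : Num.min t1 t0 <= t0 by rewrite ge_min lexx orbT.
    have tp : 0 < Num.min t1 t0 by rewrite lt_min t1p t00.
    move: tt0 tp; set tau := Num.min t1 t0 => tt0 tp.
    have X0 : 0 <= tau * (1 + dv) by apply: mulr_ge0; [exact: ltW | apply: addr_ge0].
    have X1 : 2 * (tau * (1 + dv)) <= eps.
      rewrite -t0e mulrCA ler_pM2r //; by rewrite mulr_gt0 // ltr_pwDl.
    have X2 : tau ^+ 2 * dv <= (tau * (1 + dv)) ^+ 2.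
      rewrite exprMn ler_pM2l ?exprn_gt0 //; nra.
    apply: (le_trans X2); move: X0 X1; set X := tau * (1 + dv) => X0 X1.
    rewrite ler_pdivlMr //; nra.
  - move=> l; apply: H; rewrite ?lt_min ?t1p ?t00 ?ge_min ?lexx ?mem_enum //.
have [tau tauH] := fin_all_exists tauP.
pose h f := g f + tau f *: v.
exists (undup [seq h f | f <- enum {ffun 'I_k' -> 'I_Kc}]); split.
- move=> z0; rewrite mem_undup => /mapP [f _ ->]; split.
    by rewrite /h memvD // memvZ.
  move=> l; rewrite /h dotDr dotZr.
  by have [_ _ ] := tauH f; apply.
- split; first exact: undup_uniq.
  apply: (leq_trans (size_undup _)); rewrite size_map -cardE card_ffun !card_ord.
  rewrite expnM; apply: (leq_trans (sq_le_expn k' Kcm)).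
  apply: (@leq_trans ((m ^ 2) ^ k)).
    have [m0|mp] := posnP m; first by rewrite m0 in m1; move: m1; rewrite ler10.
    by apply: leq_pexp2l => //; rewrite expn_gt0 mp.
  by apply: leq_pmull.
move=> z zZ ez.
have dzz : dot z z = 1.
  have := sqr_sqrtr (dot_ge0 z); rewrite -enormE ez expr1n => <-; done.
pose t (i : 'I_k') := dot z (u i).
have zE : z = \sum_(i < k') t i *: u i by rewrite {1}(ex z zZ).
have tsum : \sum_(i < k') t i * t i = 1 by rewrite -dzz zE dot_lc.
have tb i : -1 <= t i <= 1.
  have : t i * t i <= 1.
    rewrite -tsum (bigD1 i) //= lerDl; apply: sumr_ge0 => j _.
    by rewrite -expr2 sqr_ge0.
  move=> hh; apply/andP; split; nra.
have KcD : 1 <= -1 + Kc%:R * del.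
  move: KcP; rewrite ltr_pdivrMr // => hh; lra.
have cellP i : exists j : 'I_Kc, gam j <= t i <= gam j + del.
  have /andP [ti1 ti2] := tb i.
  have [j /andP [hj1 hj2]] := @cell_exists R (-1) del (t i) Kc del0 ti1
    (le_trans ti2 KcD) isT.
  exists j; rewrite /gam hj1 /=; apply: (le_trans hj2).
  by rewrite -addn1 natrD mulrDl mul1r addrA.
have [f0 f0P] := fin_all_exists cellP.
pose f := [ffun i => f0 i].
exists (h f).
  by rewrite mem_undup; apply: map_f; rewrite mem_enum.
have [tp tdv _] := tauH f.
have dg : dot (z - g f) (z - g f) <= eps ^+ 2 / 4.
  have -> : z - g f = \sum_(i < k') (t i - gam (f i)) *: u i.
    by rewrite {1}zE /g -sumrB; apply: eq_bigr => i _; rewrite scalerBl.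
  rewrite dot_lc //.
  apply: (@le_trans _ _ (\sum_(i < k') del * del)).
    apply: ler_sum => i _; rewrite ffunE.
    have /andP [c1 c2] := f0P i.
    have d0 : 0 <= t i - gam (f0 i) by rewrite subr_ge0.
    have d1 : t i - gam (f0 i) <= del by lra.
    move: d0 d1; set D := t i - gam (f0 i) => d0 d1; nra.
  rewrite sumr_const card_ord -mulr_natl.
  have kk : k'%:R <= k%:R :> R by rewrite ler_nat.
  apply: (@le_trans _ _ (k%:R * (del * del))).
    have D0 : 0 < del * del by rewrite mulr_gt0.
    move: kk D0; rewrite -mulr_natl; set D := del * del => kk D0; nra.
  have -> : k%:R * (del * del) = eps ^+ 2 / 4 / k%:R.
    by rewrite /del; field.
  rewrite ler_pdivrMr ?(lt_le_trans ltr01 kR) //.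
  have E0 : 0 <= eps ^+ 2 / 4 by rewrite divr_ge0 // sqr_ge0.
  move: E0; set E := eps ^+ 2 / 4 => E0; rewrite mulr1 -/E; nra.
rewrite enormE.
apply: (@le_trans _ _ (Num.sqrt (eps ^+ 2))); last first.
  by rewrite sqrtr_sqr ger0_norm // ltW.
apply: ler_wsqrtr.
have -> : z - h f = (z - g f) - tau f *: v by rewrite /h opprD addrA.
apply: (le_trans (dot_sub_le _ _)).
rewrite dotZl dotZr mulrA.
move: dg tdv; rewrite -/dv; lra.
Qed.
Lemma mpre d (T : measurableType d) (R : realType) (f : T -> R) (Y : set R) :
  measurable_fun setT f -> measurable Y -> measurable (f @^-1` Y).
Proof. by move=> mf mY; have := mf measurableT Y mY; rewrite setTI. Qed.

Lemma normal_fin (R : realType) (s : R) (S : set R) : measurable S ->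
  normal_prob 0 s S = (fine (normal_prob 0 s S))%:E /\ 0 <= fine (normal_prob 0 s S).
Proof.
move=> mS.
have h0 : (0 <= normal_prob 0 s S)%E by apply: measure_ge0.
have h1 : (normal_prob 0 s S <= 1)%E by apply: probability_le1.
have fS : normal_prob 0 s S \is a fin_num.
  by rewrite ge0_fin_numE // (le_lt_trans h1) // ltry.
by rewrite fineK //; split => //; rewrite fine_ge0.
Qed.

Lemma normal_itv_le (R : realType) (s a b : R) : s != 0 -> a <= b ->
  (normal_prob 0 s [set` `[a, b]] <= (normal_peak s * (b - a))%:E)%E.
Proof.
move=> s0 ab; rewrite /normal_prob.
apply: (@le_trans _ _ (\int[lebesgue_measure]_(x in [set` `[a, b]]) (normal_peak s)%:E))%E.
  apply: ge0_le_integral => //=.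
  - by move=> x _; rewrite lee_fin normal_pdf_ge0.
  - apply: (@measurable_funS _ _ _ _ setT) => //.
    apply/measurable_EFinP; exact: measurable_normal_pdf.
  - by move=> x _; rewrite lee_fin normal_pdf_ub.
rewrite integral_cst //= lebesgue_measure_itv /=.
case: ifP => _.
  by rewrite -EFinB -EFinM.
by rewrite mule0 lee_fin mulr_ge0 ?normal_peak_ge0 // subr_ge0.
Qed.

Lemma normal_tail (R : realType) (s eta : R) : 0 < eta ->
  exists2 M : R, 0 < M & (normal_prob 0 s [set x | (M <= `|x|)%R] <= eta%:E)%E.
Proof.
move=> e0.
pose F (k : nat) := [set x : R | k.+1%:R <= `|x|].
have mF k : measurable (F k).
  have -> : F k = Num.norm @^-1` [set` `[k.+1%:R, +oo[] .
    by apply/seteqP; split => x /=; rewrite in_itv /= andbT.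
  apply: mpre => //; exact: measurable_realfun.normr_measurable.
have cF : \bigcap_k F k = set0.
  apply/seteqP; split => // x /= /(_ (Num.truncn `|x|) I) /=.
  by move=> h; have := truncnS_gt `|x|; rewrite ltNge h.
have noninc : nonincreasing_seq F.
  move=> i j ij; apply/subsetPset => x /=; apply: le_trans; by rewrite ler_nat ltnS.
have F0 : (normal_prob 0 s (F 0%N) < +oo)%E.
  have h1 := probability_le1 (normal_prob 0 s) (mF 0%N).
  by rewrite (le_lt_trans h1) // ltry.
have := @nonincreasing_cvg_mu _ _ _ (normal_prob 0 s) F F0 mF _ noninc.
rewrite cF measure0 => /(_ measurable0) cvg0.
have /fine_cvgP [_ h] := cvg0.
move/cvgrPdist_lt: h => /(_ eta e0) [N _ HN].
exists N.+1%:R => //.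
have := HN N (leqnn N); rewrite /= sub0r normrN.
have [-> hge] := normal_fin s (mF N).
by rewrite lee_fin ger0_norm // => /ltW.
Qed.
Lemma union_bound d (T : measurableType d) (R : realType)
  (mu : {measure set T -> \bar R}) (I : eqType) (s : seq I) (F : I -> set T)
  (A : set T) :
  measurable A -> (forall i, measurable (F i)) ->
  A `<=` [set x | exists2 i, i \in s & F i x] ->
  (mu A <= \sum_(i <- s) mu (F i))%E.
Proof.
elim: s A => [|i s IH] A mA mF hA.
  have -> : A = set0.
    by apply/seteqP; split => // x /hA [j]; rewrite in_nil.
  by rewrite measure0 big_nil.
rewrite big_cons.
have mD : measurable (A `\` F i) by apply: measurableD.
apply: (@le_trans _ _ (mu (F i `|` (A `\` F i)))).
  apply: le_measure; rewrite ?inE //; first exact: measurableU.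
  by move=> x Ax; case: (pselect (F i x)) => h; [left|right].
apply: (le_trans (measureU2 _ _ _)) => //.
apply: leeD2l; apply: IH => // x [/hA [j]]; rewrite in_cons.
case/orP=> [/eqP ->|js] Fj Fi //; by exists j.
Qed.

Lemma meas_forall d (T : measurableType d) (I : eqType) (s : seq I)
  (G : I -> set T) : (forall i, measurable (G i)) ->
  measurable [set w | forall i, i \in s -> G i w].
Proof.
move=> mG; elim: s => [|i s IH].
  have -> : [set w | forall i, i \in [::] -> G i w] = setT.
    by apply/seteqP; split => // x _ j; rewrite in_nil.
  exact: measurableT.
have -> : [set w | forall j, j \in i :: s -> G j w] =
    G i `&` [set w | forall j, j \in s -> G j w].
  apply/seteqP; split => x /=.
    by move=> h; split; [apply: h; rewrite mem_head | move=> j js; apply: h; rewrite in_cons js orbT].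
  by case=> h1 h2 j; rewrite in_cons => /orP [/eqP ->|]; [|apply: h2].
exact: measurableI.
Qed.

Lemma meas_absge (R : realType) (M : R) : measurable [set x : R | M <= `|x|].
Proof.
have -> : [set x : R | M <= `|x|] = Num.norm @^-1` [set` `[M, +oo[].
  by apply/seteqP; split => x /=; rewrite in_itv /= andbT.
apply: mpre => //; exact: normr_measurable.
Qed.
Lemma hyper_null (R : realType) (d : measure_display) (T : measurableType d)
  (P : probability T R) (m n : nat) (A : 'I_m -> 'I_n -> T -> R) (l : 'I_m)
  (z : 'I_n -> R) (j0 : 'I_n) :
  z j0 != 0 -> (0 < m)%N -> gaussian_entries P A ->
  mutually_independent_entries P A ->
  P [set w | \sum_(j < n) A l j w * z j = 0] = 0%E.
Proof.
move=> zj0 m0 hG hI.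
pose s : R := Num.sqrt (m%:R^-1).
have s0 : s != 0 by rewrite gt_eqF // sqrtr_gt0 invr_gt0 ltr0n.
pose pk := normal_peak s.
have pk0 : 0 < pk by apply: normal_peak_gt0.
have mX j : measurable_fun setT (A l j) := (hG l j).1.
have lawX j B : measurable B -> P (A l j @^-1` B) = normal_prob 0 s B.
  exact: (hG l j).2.
pose bad := [set w | \sum_(j < n) A l j w * z j = 0].
have mbad : measurable bad.
  have -> : bad = (fun w => \sum_(j < n) A l j w * z j) @^-1` [set 0].
    by [].
  apply: mpre; last exact: measurable_set1.
  apply: measurable_sum => j; apply: measurable_funM; first exact: mX.
  exact: measurable_cst.
apply/eqP; rewrite eq_le measure_ge0 andbT.
apply/lee_addgt0Pr => eta eta0; rewrite add0e.
have n1 : 0 < n%:R + 1 :> R by rewrite ltr_pwDr // ler0n.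
have [M M0 hM] := @normal_tail R s (eta / (2 * (n%:R + 1)))
  (divr_gt0 eta0 (mulr_gt0 (ltr0n R 2) n1)).
pose L := (\sum_(j < n) `|z j|) / `|z j0|.
have L0 : 0 <= L.
  by rewrite /L divr_ge0 // sumr_ge0 // => j _; rewrite normr_ge0.
pose E := \prod_(j < n | j != j0) (2 * M * pk).
have E0 : 0 <= E.
  rewrite /E prodr_ge0 // => j _; repeat apply: mulr_ge0 => //; by apply: ltW.
pose C1 := pk * (2 * L) * (2 * M) * E.
have C10 : 0 <= C1.
  rewrite /C1; repeat apply: mulr_ge0 => //; by apply: ltW.
pose N := Num.truncn (2 * C1 / eta).
have hN : 2 * C1 / eta < N.+1%:R by apply: truncnS_gt.
pose del := 2 * M / N.+1%:R.
have del0 : 0 < del by rewrite /del divr_gt0 // mulr_gt0 // ltr0n.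
have Ndel : N.+1%:R * del = 2 * M.
  by rewrite /del mulrCA divff ?mulr1 // pnatr_eq0.
pose cc (i : nat) : set R := [set` `[-M + i%:R * del, -M + i.+1%:R * del]].
pose mu (f : {ffun 'I_n -> 'I_N.+1}) :=
  - (\sum_(j < n | j != j0) z j * (-M + (f j)%:R * del)) / z j0.
pose J f : set R := [set` `[mu f - L * del, mu f + L * del]].
pose S (f : {ffun 'I_n -> 'I_N.+1}) (j : 'I_n) : set R :=
  if j == j0 then (if f j0 == ord0 then J f else set0) else cc (f j).
have mS f j : measurable (S f j).
  rewrite /S; case: ifP => _; [case: ifP => _|].
  - exact: measurable_itv.
  - exact: measurable0.
  - exact: measurable_itv.
pose box f := [set w | forall j, S f j (A l j w)].
pose tl j := A l j @^-1` [set x : R | M <= `|x|].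
pose pieces (p : 'I_n + {ffun 'I_n -> 'I_N.+1}) :=
  match p with inl j => tl j | inr f => box f end.
have mpieces p : measurable (pieces p).
  case: p => [j|f] /=.
    by apply: mpre => //; exact: meas_absge.
  have -> : box f = [set w | forall j, j \in enum 'I_n -> (A l j @^-1` S f j) w].
    apply/seteqP; split => w /= h j //; apply: h; by rewrite mem_enum.
  by apply: meas_forall => j; apply: mpre => //.
pose sq := [seq inl j | j <- enum 'I_n] ++
  [seq inr f | f <- enum {ffun 'I_n -> 'I_N.+1}].
have cover : bad `<=` [set w | exists2 p, p \in sq & pieces p w].
  move=> w bw.
  have [[j hj]|nt] := pselect (exists j, M <= `|A l j w|).
    exists (inl j) => //.
    by rewrite mem_cat; apply/orP; left; apply: map_f; rewrite mem_enum.
  have ltj j : `|A l j w| < M.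
    by rewrite ltNge; apply/negP => h; apply: nt; exists j.
  have cellj j : exists i : 'I_N.+1,
      -M + i%:R * del <= A l j w <= -M + i.+1%:R * del.
    have := ltj j; rewrite ltr_norml => /andP [h1 h2].
    apply: cell_exists => //; first exact: ltW.
    by rewrite Ndel; lra.
  have [g0 g0P] := fin_all_exists cellj.
  pose f := [ffun j => if j == j0 then ord0 else g0 j].
  exists (inr f).
    by rewrite mem_cat; apply/orP; right; apply: map_f; rewrite mem_enum.
  move=> j /=; rewrite /S.
  have [ej|nej] := eqVneq j j0; last first.
    by rewrite /cc /= in_itv /= ffunE (negbTE nej) g0P.
  subst j.
  have -> : f j0 = ord0 by rewrite ffunE eqxx.
  rewrite eqxx /J /= in_itv /= -ler_distl.
  pose X j := A l j w.
  pose a j := -M + (f j)%:R * del.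
  have Xa j : j != j0 -> 0 <= X j - a j <= del.
    move=> nj; have := g0P j; rewrite /a ffunE (negbTE nj) => /andP [h1 h2].
    move: h2; rewrite -addn1 natrD mulrDl mul1r => h2.
    apply/andP; split; rewrite /X; lra.
  have hs : X j0 * z j0 = - \sum_(j < n | j != j0) X j * z j.
    move: bw; rewrite /bad /= (bigD1 j0) //= => h.
    by apply/eqP; rewrite -addr_eq0; apply/eqP.
  have key : X j0 - mu f =
      - (\sum_(j < n | j != j0) z j * (X j - a j)) / z j0.
    have -> : \sum_(j < n | j != j0) z j * (X j - a j) =
        \sum_(j < n | j != j0) X j * z j - \sum_(j < n | j != j0) z j * a j.
      by rewrite -sumrB; apply: eq_bigr => j _; rewrite mulrBr (mulrC (z j)).
    have -> : mu f = - (\sum_(j < n | j != j0) z j * a j) / z j0 by [].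
    have -> : \sum_(j < n | j != j0) X j * z j = - (X j0 * z j0).
      by rewrite hs opprK.
    by field.
  have -> : A l j0 w = X j0 by [].
  rewrite key normrM normrN normfV.
  have hsum : `|\sum_(j < n | j != j0) z j * (X j - a j)| <=
      (\sum_(j < n) `|z j|) * del.
    apply: (le_trans (ler_norm_sum _ _ _)).
    apply: (@le_trans _ _ (\sum_(j < n | j != j0) `|z j| * del)).
      apply: ler_sum => j nj; rewrite normrM ler_wpM2l //.
      by have /andP [h1 h2] := Xa j nj; rewrite ger0_norm.
    rewrite -mulr_suml ler_wpM2r ?(ltW del0) //.
    by rewrite [X in _ <= X](bigD1 j0) //= lerDr normr_ge0.
  rewrite /L mulrAC ler_wpM2r // invr_ge0 normr_ge0 //.
apply: (le_trans (union_bound P mbad mpieces cover)).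
have hsplit : (\sum_(p <- sq) P (pieces p) =
   \sum_(j <- enum 'I_n) P (pieces (inl j)) +
   \sum_(f <- enum {ffun 'I_n -> 'I_N.+1}) P (pieces (inr f)))%E.
  by rewrite big_cat !big_map.
rewrite hsplit.
have htl : (\sum_(j <- enum 'I_n) P (pieces (inl j)) <= (eta / 2)%:E)%E.
  apply: (@le_trans _ _ (\sum_(j <- enum 'I_n) (eta / (2 * (n%:R + 1)))%:E)%E).
    by apply: lee_sum => j _; rewrite /tl lawX //; exact: meas_absge.
  rewrite sumEFin lee_fin big_enum /= sumr_const card_ord.
  have -> : eta / (2 * (n%:R + 1)) *+ n = eta / 2 * (n%:R / (n%:R + 1)).
    by rewrite -mulr_natr; field; rewrite gt_eqF.
  by rewrite ger_pMr ?divr_gt0 // ler_pdivrMr // mul1r lerDl ler01.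
have hbox f : P (box f) = (\prod_(j < n) normal_prob 0 s (S f j))%E.
  pose B (l' : 'I_m) (j : 'I_n) := if l' == l then S f j else setT.
  have mB l' j : measurable (B l' j).
    by rewrite /B; case: ifP => _; [exact: mS|exact: measurableT].
  have -> : box f = [set w | forall l' j, B l' j (A l' j w)].
    apply/seteqP; split => w /= h.
      by move=> l' j; rewrite /B; case: ifP => [/eqP ->|].
    by move=> j; have := h l j; rewrite /B eqxx.
  rewrite (hI B mB) (bigD1 l) //=.
  have -> : (\prod_(i < m | i != l) \prod_(j < n) P (A i j @^-1` B i j))%E = 1%E.
    rewrite big1 // => l' nl; rewrite big1 // => j _.
    by rewrite /B (negbTE nl) preimage_setT probability_setT.
  by rewrite mule1; apply: eq_bigr => j _; rewrite /B eqxx lawX.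
pose q (j : 'I_n) (i : 'I_N.+1) : R :=
  if j == j0 then (if i == ord0 then pk * (2 * L * del) else 0) else pk * del.
have hb : (\sum_(f <- enum {ffun 'I_n -> 'I_N.+1}) P (pieces (inr f))
    <= (eta / 2)%:E)%E.
  apply: (@le_trans _ _ (\sum_(f <- enum {ffun 'I_n -> 'I_N.+1})
      (\prod_(j < n) q j (f j))%:E)%E).
    apply: lee_sum => f _; rewrite /= hbox.
    rewrite (eq_bigr (fun j => (fine (normal_prob 0 s (S f j)))%:E)); last first.
      by move=> j _; rewrite -(normal_fin s (mS f j)).1.
    rewrite prodEFin lee_fin; apply: ler_prod => j _.
    have [e1 e2] := normal_fin s (mS f j).
    rewrite e2 /= -lee_fin -e1 /q /S.
    have Ld0 : 0 <= L * del by rewrite mulr_ge0 // ltW.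
    have [ej|nej] := eqVneq j j0; last first.
      apply: (le_trans (normal_itv_le s0 _)).
        by rewrite lerD2l ler_pM2r // ler_nat.
      by rewrite lee_fin -/pk ler_pM2l // -addn1 natrD mulrDl mul1r; lra.
    subst j; case: ifP => _.
    - apply: (le_trans (normal_itv_le s0 _)); first lra.
      rewrite lee_fin -/pk ler_pM2l //; lra.
    - by rewrite measure0.
  rewrite sumEFin lee_fin.
  have -> : \sum_(f <- enum {ffun 'I_n -> 'I_N.+1}) \prod_(j < n) q j (f j) =
      \prod_(j < n) \sum_(i < N.+1) q j i.
    by rewrite bigA_distr_bigA big_enum; apply: eq_bigl.
  rewrite (bigD1 j0) //=.
  have -> : \sum_(i < N.+1) q j0 i = pk * (2 * L * del).
    rewrite (bigD1 ord0) //= big1 ?addr0; first by rewrite /q !eqxx.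
    by move=> i /negbTE ni; rewrite /q eqxx ni.
  have -> : \prod_(j < n | j != j0) \sum_(i < N.+1) q j i = E.
    apply: eq_bigr => j nj.
    rewrite /q (negbTE nj) sumr_const card_ord -[pk * del *+ _]mulr_natl mulrCA Ndel.
    by rewrite mulrC.
  have -> : pk * (2 * L * del) * E = C1 / N.+1%:R.
    rewrite /C1 /del; field; by rewrite addrC natr1 pnatr_eq0.
  rewrite ler_pdivrMr ?ltr0n //.
  move: hN; rewrite ltr_pdivrMr // => hN; lra.
apply: le_trans (leeD htl hb) _; rewrite -EFinD lee_fin; lra.
Qed.
Unset Implicit Arguments.
Theorem lemma24 (R : realType) :
  exists C2 c K : R, exists p : nat,
    [/\ 0 < C2, 0 < c & 0 < K] /\
    forall (eps : R), 0 < eps < 1 ->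
    forall (m n k : nat) (Z : {vspace 'rV[R]_n}), \dim Z = k ->
    forall (d : measure_display) (T : measurableType d) (P : probability T R)
      (A : 'I_m -> 'I_n -> T -> R),
      (0 < m)%N ->
      gaussian_entries P A ->
      mutually_independent_entries P A ->
      K * eps ^- p * k%:R <= m%:R ->
      exists F : set T, [/\ measurable F, F `<=` event_EZA k eps Z A &
        (1 - C2 * expR (- c * eps * m%:R))%:E <= P F]%E.
Proof.
exists 1, 1, 10, 1%N; split => //.
move=> eps /andP [e0 e1] m n k Z dimZ d T P A m0 hG hI hm.
rewrite expr1 in hm.
have lowb : forall F : set T, P F = 1%E -> ((1 - 1 * expR (- 1 * eps * m%:R))%:E <= P F)%E.
  move=> F ->; rewrite lee_fin mul1r gerBl; exact: expR_ge0.
have [k0|kp] := posnP k.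
  exists setT; split => //; last by apply: lowb; rewrite probability_setT.
  move=> w _; exists [::]; split => //.
  move=> z zZ ez; exfalso.
  have Z0 : Z = 0%VS by apply/eqP; rewrite -dimv_eq0 dimZ k0.
  move: zZ; rewrite Z0 memv0 => /eqP z0.
  by move: ez; rewrite z0 enormE dot0l sqrtr0 => /eqP; rewrite eq_sym oner_eq0.
have Zn0 : Z != 0%VS by rewrite -dimv_eq0 dimZ -lt0n.
set v := vpick Z.
have vZ : v \in Z by apply: memv_pick.
have vn0 : v != 0 by rewrite vpick0.
have [j0 vj0] : exists j0, v 0 j0 != 0.
  apply/not_existsP => h; move/eqP: vn0; apply; apply/rowP => j.
  rewrite mxE; have := h j; by move/negP; rewrite negbK => /eqP.
pose bad (l : 'I_m) := [set w | \sum_(j < n) A l j w * v 0 j = 0].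
have Pbad l : P (bad l) = 0%E.
  exact: (@hyper_null R d T P m n A l (fun j => v 0 j) j0 vj0 m0 hG hI).
have mbad l : measurable (bad l).
  have -> : bad l = (fun w => \sum_(j < n) A l j w * v 0 j) @^-1` [set 0] by [].
  apply: mpre; last exact: measurable_set1.
  apply: measurable_sum => j; apply: measurable_funM; first exact: (hG l j).1.
  exact: measurable_cst.
pose F := [set w | forall l, l \in enum 'I_m -> (~` bad l) w].
have mF : measurable F.
  by apply: meas_forall => l; apply: measurableC.
exists F; split => //.
- move=> w Fw.
  pose a (l : 'I_m) := \row_j mat_at A w l j.
  have av l : dot (a l) v != 0.
    have := Fw l; rewrite mem_enum => /(_ isT) /= /eqP.
    by congr (_ != _); rewrite /dot; apply: eq_bigr => j _; rewrite !mxE.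
  have [Z0 [h1 h2 h3]] := @net_exists R n m k Z eps a v dimZ kp e0 e1 hm vZ av.
  exists Z0; split => //.
  move=> z0 /h1 [z0Z hz0]; split => // l.
  have := hz0 l.
  by congr (_ != _); rewrite /dot; apply: eq_bigr => j _; rewrite !mxE.
- apply: lowb.
  have hC : P (~` F) = 0%E.
    apply/eqP; rewrite eq_le measure_ge0 andbT.
    apply: (@le_trans _ _ (\sum_(l <- enum 'I_m) P (bad l))%E).
      apply: union_bound => //; first exact: measurableC.
      move=> w /= nF.
      have [//|hn] := pselect (exists2 l, l \in enum 'I_m & bad l w).
      exfalso; apply: nF => l lm bl; apply: hn; by exists l.
    by rewrite big1 // => l _; rewrite Pbad.
  have := probability_setC P (measurableC mF).
  by rewrite setCK hC => ->; rewrite sube0.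
Qed.
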